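(* Let $E$ be a real Hilbert space with $\dim(E)\ge2$, let $h\in E$ be a unit vector, and let $H^+=\{x\in E\mid (h,x)>0\}$. Define the relation $\preceq$ on $H^+$ by $x\preceq y \iff \|x-y_\perp\|\le y_h$. Then $(H^+,\preceq)$ is a cc sponge.
   Context: For $x\in E$, $x_h=(h,x)$ and $x_\perp=x-(h,x)h$. An orientation on a set $S$ is a reflexive, antisymmetric binary relation $\preceq$. For $P\subseteq S$, $P$ is right-bounded if there is $s\in S$ with $p\preceq s$ for all $p\in P$. An element $x$ is the join of $P$ if $p\preceq x$ for all $p\in P$ and $x\preceq y$ for every $y\in S$ with $p\preceq y$ for all $p\in P$. An oriented set $(S,\preceq)$ is a conditionally complete sponge (cc sponge) if every nonempty right-bounded subset of $S$ has a join. *)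

(* Defs.v *)
(* E is a complete normed module over R : realType
   whose norm is induced by an inner product, i.e. a real Hilbert space. *)
From HB Require Import structures.
From mathcomp Require Import all_boot all_order all_algebra.
From mathcomp Require Import all_classical all_reals all_analysis.
Set Implicit Arguments. Unset Strict Implicit. Unset Printing Implicit Defensive.
Import Order.TTheory GRing.Theory Num.Theory.
Import numFieldNormedType.Exports.
Local Open Scope ring_scope.

Definition inner_product_for (R : realType) (E : normedModType R)
  (ip : E -> E -> R) : Prop :=
  [/\ (forall x y, ip x y = ip y x),
      (forall (a : R) (x y z : E), ip (a *: x + y) z = a * ip x z + ip y z)
    & (forall x, `|x| ^+ 2 = ip x x)].

Definition dim_ge2 (R : realType) (E : normedModType R) : Prop :=
  exists x y : E, forall a b : R, a *: x + b *: y = 0 -> a = 0 /\ b = 0.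

Definition comp_h (R : realType) (E : normedModType R) (ip : E -> E -> R)
  (h x : E) : R := ip h x.
Definition comp_perp (R : realType) (E : normedModType R) (ip : E -> E -> R)
  (h x : E) : E := x - ip h x *: h.

Definition Hplus (R : realType) (E : normedModType R) (ip : E -> E -> R)
  (h : E) : E -> Prop := fun x => 0 < ip h x.

Definition cone_rel (R : realType) (E : normedModType R) (ip : E -> E -> R)
  (h : E) (x y : E) : Prop := `|x - comp_perp ip h y| <= comp_h ip h y.

Definition orientation (T : Type) (S : T -> Prop) (le : T -> T -> Prop) : Prop :=
  (forall x, S x -> le x x) /\
  (forall x y, S x -> S y -> le x y -> le y x -> x = y).

Definition right_bounded (T : Type) (S : T -> Prop) (le : T -> T -> Prop)
  (P : T -> Prop) : Prop :=
  exists s, S s /\ forall p, P p -> le p s.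

Definition is_join (T : Type) (S : T -> Prop) (le : T -> T -> Prop)
  (P : T -> Prop) (x : T) : Prop :=
  S x /\ (forall p, P p -> le p x) /\
  (forall y, S y -> (forall p, P p -> le p y) -> le x y).

Definition cc_sponge (T : Type) (S : T -> Prop) (le : T -> T -> Prop) : Prop :=
  orientation S le /\
  forall P : T -> Prop, (forall p, P p -> S p) -> (exists p, P p) ->
    right_bounded S le P -> exists x, is_join S le P x.

(* Main.v *)
Require Import Defs.
From HB Require Import structures.
From mathcomp Require Import all_boot all_order all_algebra.
From mathcomp Require Import all_classical all_reals all_analysis.
From mathcomp Require Import ring lra zify.
Import Order.TTheory GRing.Theory Num.Theory.
Import numFieldNormedType.Exports.
Local Open Scope ring_scope.

Local Set Implicit Arguments.
Section IP.
Context (R : realType) (E : normedModType R) (ip : E -> E -> R)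
  (hip : inner_product_for ip).

Lemma ipC x y : ip x y = ip y x.
Proof. by case: hip. Qed.
Lemma ipL a x y z : ip (a *: x + y) z = a * ip x z + ip y z.
Proof. by case: hip. Qed.
Lemma ipN2 x : `|x| ^+ 2 = ip x x.
Proof. by case: hip. Qed.
Lemma ip0l z : ip 0 z = 0.
Proof. have := ipL 1 0 0 z; rewrite scale1r addr0 mul1r => H; lra. Qed.
Lemma ipDl x y z : ip (x + y) z = ip x z + ip y z.
Proof. by have := ipL 1 x y z; rewrite scale1r mul1r. Qed.
Lemma ipZl a x z : ip (a *: x) z = a * ip x z.
Proof. by rewrite -[a *: x]addr0 ipL ip0l addr0. Qed.
Lemma ipNl x z : ip (- x) z = - ip x z.
Proof. by rewrite -scaleN1r ipZl mulN1r. Qed.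
Lemma ipBl x y z : ip (x - y) z = ip x z - ip y z.
Proof. by rewrite ipDl ipNl. Qed.
Lemma ipDr x y z : ip z (x + y) = ip z x + ip z y.
Proof. by rewrite !(ipC z) ipDl. Qed.
Lemma ipZr a x z : ip z (a *: x) = a * ip z x.
Proof. by rewrite !(ipC z) ipZl. Qed.
Lemma ipNr x z : ip z (- x) = - ip z x.
Proof. by rewrite !(ipC z) ipNl. Qed.
Lemma ipBr x y z : ip z (x - y) = ip z x - ip z y.
Proof. by rewrite !(ipC z) ipBl. Qed.

Lemma interp (p c1 c2 : E) (t : R) :
  `|p - ((1 - t) *: c1 + t *: c2)| ^+ 2 =
  (1 - t) * `|p - c1| ^+ 2 + t * `|p - c2| ^+ 2 - t * (1 - t) * `|c1 - c2| ^+ 2.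
Proof.
rewrite !ipN2 !(ipNl, ipNr, ipDl, ipDr, ipZl, ipZr).
rewrite ?(ipC c1 p) ?(ipC c2 p) ?(ipC c2 c1). ring.
Qed.

Variable h : E.
Hypothesis hunit : `|h| = 1.

Lemma ihh : ip h h = 1.
Proof. by rewrite -ipN2 hunit expr1n. Qed.

Lemma pyth (t : R) (u : E) : ip h u = 0 -> `|t *: h + u| ^+ 2 = t ^+ 2 + `|u| ^+ 2.
Proof.
move=> hu; rewrite !ipN2 !(ipDl, ipDr, ipZl, ipZr) ihh hu (ipC u h) hu. ring.
Qed.

Lemma perp0 y : ip h (comp_perp ip h y) = 0.
Proof. by rewrite /comp_perp ipBr ipZr ihh mulr1 subrr. Qed.

Lemma decomp (x c : E) : ip h c = 0 ->
  `|x - c| ^+ 2 = (ip h x) ^+ 2 + `|comp_perp ip h x - c| ^+ 2.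
Proof.
move=> hc. rewrite -pyth; last by rewrite ipBr perp0 hc subrr.
congr (_ ^+ 2); congr (`| _ |); rewrite /comp_perp.
by rewrite addrA (addrC (ip h x *: h)) subrK.
Qed.

Lemma ip0r z : ip z 0 = 0.
Proof. by rewrite ipC ip0l. Qed.

Lemma cs x : `|ip h x| <= `|x|.
Proof.
have := @decomp x 0 (ip0r h); rewrite !subr0 => H.
have H1 := normr_ge0 x; have H2 := normr_ge0 (comp_perp ip h x).
have H4 : `|ip h x|^+2 = ip h x ^+2 := real_normK (num_real _).
have H3 := normr_ge0 (ip h x). nra.
Qed.
End IP.
Unset Implicit Arguments.
Local Open Scope classical_set_scope.


Theorem mainTheorem2 (R : realType) (E : completeNormedModType R)
  (ip : E -> E -> R) (hip : inner_product_for ip) (hdim : dim_ge2 E)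
  (h : E) (hunit : `|h| = 1) :
  cc_sponge (Hplus ip h) (cone_rel ip h).
Proof.
have sq_le (n r : R) : 0 <= n -> n <= r -> n ^+ 2 <= r ^+ 2 by move=> *; nra.
have le_sq (n r : R) : 0 <= n -> 0 <= r -> n ^+ 2 <= r ^+ 2 -> n <= r by move=> *; nra.
split.
  split.
  - move=> x Hx; rewrite /cone_rel /comp_perp /comp_h.
    rewrite opprB addrC subrK normrZ hunit mulr1 gtr0_norm //.
  - move=> x y Hx Hy Hxy Hyx.
    rewrite /cone_rel /comp_h /Hplus in Hxy Hyx Hx Hy.
    have Ex := decomp hip h hunit x _ (perp0 hip h hunit y).
    have Ey := decomp hip h hunit y _ (perp0 hip h hunit x).
    rewrite (distrC (comp_perp ip h y)) in Ey.
    have n1 := normr_ge0 (x - comp_perp ip h y).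
    have n2 := normr_ge0 (y - comp_perp ip h x).
    have n3 := normr_ge0 (comp_perp ip h x - comp_perp ip h y).
    have h1 := sq_le _ _ n1 Hxy; have h2 := sq_le _ _ n2 Hyx.
    rewrite Ex in h1; rewrite Ey in h2.
    have hd2 : `|comp_perp ip h x - comp_perp ip h y| ^+ 2 <= 0 by lra.
    have hd : `|comp_perp ip h x - comp_perp ip h y| = 0 by nra.
    have := sqr_ge0 (`|comp_perp ip h x - comp_perp ip h y|) => sq0.
    have ha2 : ip h x ^+ 2 = ip h y ^+ 2 by lra.
    have ha : ip h x = ip h y by nra.
    move/eqP: hd; rewrite normr_eq0 subr_eq0 => /eqP hp.
    have ex : x = comp_perp ip h x + ip h x *: h by rewrite /comp_perp subrK.
    have ey : y = comp_perp ip h y + ip h y *: h by rewrite /comp_perp subrK.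
    by rewrite [LHS]ex [RHS]ey hp ha.
move=> P HP [p0 Pp0] [s [Hs Hbnd]].
pose feas c r := ip h c = 0 /\ forall p, P p -> `|p - c| ^+ 2 <= r.
pose S := [set r | exists c, feas c r].
have ap0 : 0 < ip h p0 := HP _ Pp0.
have feas_lb c r : feas c r -> ip h p0 ^+ 2 <= r.
  move=> [hc Hc]; have := Hc _ Pp0; rewrite (decomp hip h hunit p0 _ hc) => H.
  have := normr_ge0 (comp_perp ip h p0 - c); nra.
have feas_ub y : Hplus ip h y -> (forall p, P p -> cone_rel ip h p y) ->
    feas (comp_perp ip h y) (ip h y ^+ 2).
  move=> Hy Hb; split; first exact: perp0.
  by move=> p Pp; apply: sq_le (normr_ge0 _) (Hb p Pp).
have Ss : S (ip h s ^+ 2) by exists (comp_perp ip h s); exact: feas_ub.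
have hlb : has_lbound S by exists (ip h p0 ^+ 2) => r [c Hc]; exact: feas_lb Hc.
have hinf : has_inf S by split=> //; exists (ip h s ^+ 2).
pose m := inf S.
have mlb c r : feas c r -> m <= r by move=> Hc; apply: ge_inf hlb _ _; exists c.
have m_gt0 : 0 < m.
  have : ip h p0 ^+ 2 <= m.
    by apply: lb_le_inf; [exists (ip h s ^+ 2) | move=> r [c Hc]; exact: feas_lb Hc].
  nra.
have conv c1 r1 c2 r2 t : feas c1 r1 -> feas c2 r2 -> 0 <= t -> t <= 1 ->
    feas ((1 - t) *: c1 + t *: c2) ((1 - t) * r1 + t * r2 - t * (1 - t) * `|c1 - c2| ^+ 2).
  move=> [h1 H1] [h2 H2] t0 t1; split.
    by rewrite (ipDr hip) !(ipZr hip) h1 h2 !mulr0 addr0.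
  move=> p Pp; rewrite (interp hip); have := H1 p Pp; have := H2 p Pp; nra.
have seq n : exists c, feas c (m + n.+1%:R^-1).
  have [r [c Hc] Hr] := @inf_adherent _ S (n.+1%:R^-1) ltac:(by rewrite invr_gt0 ltr0Sn) hinf.
  exists c; split; first by case: Hc.
  move=> p Pp; have := Hc.2 p Pp; rewrite -/m in Hr; move=> HH; exact: le_trans HH (ltW Hr).
have [cn Hcn] := choice seq.
have cauchy_est i j : `|cn i - cn j| ^+ 2 <= 2 * (i.+1%:R^-1 + j.+1%:R^-1).
  have := mlb _ _ (conv _ _ _ _ (2^-1) (Hcn i) (Hcn j) ltac:(lra) ltac:(lra)).
  move: (i.+1%:R^-1 : R) (j.+1%:R^-1 : R) (`|cn i - cn j| ^+ 2) => a b D H; lra.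
have ecvg (eps : R) : 0 < eps -> exists N, forall n, (N <= n)%N -> n.+1%:R^-1 <= eps.
  move=> e0; set N := Num.Def.archi_bound (eps^-1); exists N => n hn.
  have H0 : 0 < eps^-1 by rewrite invr_gt0.
  have H : eps^-1 < N%:R := archi_boundP (ltW H0).
  have H2 : N%:R <= n.+1%:R :> R by rewrite ler_nat; lia.
  rewrite -[leRHS]invrK lef_pV2 ?posrE ?invr_gt0 ?ltr0Sn //.
  exact: le_trans (ltW H) H2.
have hcauchy : cauchy (cn @ \oo).
  apply: cauchy_exP => eps e0.
  have [N HN] := ecvg (eps ^+ 2 / 8) ltac:(by apply: divr_gt0; nra).
  exists (cn N); exists N => // n /= HNn; rewrite -ball_normE /=.
  move: (cauchy_est N n) (HN N (leqnn _)) (HN n HNn) (normr_ge0 (cn N - cn n)).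
  have k8 : eps ^+ 2 / 8 * 8 = eps ^+ 2 by rewrite divfK.
  move: k8; move: (N.+1%:R^-1 : R) (n.+1%:R^-1 : R) `|cn N - cn n| (eps ^+ 2 / 8).
  move=> a b d k k8 H1 H2 H3 H4; nra.
have cv : cvg (cn @ \oo) := (cauchy_cvgP _).1 hcauchy.
set c0 := lim (cn @ \oo) in cv.
have Hcv (eps : R) : 0 < eps -> exists N, forall n, (N <= n)%N -> `|c0 - cn n| < eps.
  move=> e0; have := (cvgrPdist_lt _ _).1 (cv _) eps e0; case=> N _ HN; exists N => n /HN //.
have comb (eps : R) : 0 < eps -> exists n, `|c0 - cn n| < eps /\ n.+1%:R^-1 <= eps.
  move=> e0; have [N1 H1] := Hcv _ e0; have [N2 H2] := ecvg _ e0.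
  exists (maxn N1 N2); split; [apply: H1 | apply: H2]; lia.
have hc0 : ip h c0 = 0.
  apply/eqP; rewrite -normr_le0; apply/ler_addgt0Pr => eps e0; rewrite add0r.
  have [n [Hn _]] := comb _ e0.
  have : ip h c0 = ip h (c0 - cn n) by rewrite (ipBr hip) (Hcn n).1 subr0.
  move=> ->; apply: le_trans (cs hip h hunit _) _; exact: ltW.
have feas0 : feas c0 m.
  split=> // p Pp; apply/ler_addgt0Pr => eps e0.
  pose del := eps / (2 * m + 6 + eps).
  have hden : 0 < 2 * m + 6 + eps by lra.
  have hdel : del * (2 * m + 6 + eps) = eps by rewrite /del divfK // gt_eqF.
  have del0 : 0 < del by apply: divr_gt0.
  have [n [Hn1 Hn2]] := comb _ del0.
  have tri := ler_distD (cn n) p c0; rewrite (distrC (cn n) c0) in tri.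
  have := (Hcn n).2 p Pp.
  set q := `|p - cn n| in tri *; set z := `|p - c0| in tri *; set w := `|c0 - cn n| in tri Hn1 *.
  have q0 : 0 <= q by apply: normr_ge0.
  have z0 : 0 <= z by apply: normr_ge0.
  have w0 : 0 <= w by apply: normr_ge0.
  move=> Hq; clearbody del.
  move: Hn2 Hq; move: (n.+1%:R^-1 : R) => en Hn2 Hq.
  have del1 : del <= 1 by nra.
  have q1 : 2 * q <= q ^+ 2 + 1.
    by have := sqr_ge0 (q - 1); rewrite sqrrB1 => ?; lra.
  have qb : q <= m + 2 by lra.
  have zb : z <= q + del by lra.
  have : z ^+ 2 <= (q + del) ^+ 2 by apply: sq_le.
  nra.
pose x := c0 + Num.sqrt m *: h.
have ax : ip h x = Num.sqrt m.
  by rewrite /x (ipDr hip) hc0 (ipZr hip) (ihh hip h hunit) mulr1 add0r.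
have px : comp_perp ip h x = c0 by rewrite /comp_perp ax addrK.
have sm0 : 0 <= Num.sqrt m := sqrtr_ge0 m.
have smm : Num.sqrt m ^+ 2 = m := sqr_sqrtr (ltW m_gt0).
exists x; split; [|split].
- by rewrite /Hplus ax sqrtr_gt0.
- move=> p Pp; rewrite /cone_rel /comp_h px ax.
  apply: le_sq (normr_ge0 _) sm0 _.
  by rewrite smm; apply: feas0.2.
- move=> y Hy Hub; rewrite /cone_rel /comp_h.
  have fc := feas_ub y Hy Hub.
  set c := comp_perp ip h y in fc *; set r := ip h y in fc Hy *.
  rewrite /Hplus -/r in Hy.
  have key : m + `|c0 - c| ^+ 2 <= r ^+ 2.
    rewrite addrC -lerBrDr; apply/ler_addgt0Pr => eps e0.
    set D := `|c0 - c| ^+ 2.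
    have D0 : 0 <= D by rewrite /D sqr_ge0.
    pose t := eps / (eps + D).
    have ht : t * (eps + D) = eps by rewrite /t divfK // gt_eqF //; lra.
    have t0 : 0 < t by apply: divr_gt0 => //; lra.
    have t1 : t <= 1 by nra.
    have := mlb _ _ (conv _ _ _ _ t feas0 fc (ltW t0) t1) => H.
    rewrite -/D in H; clearbody t.
    have H2 : t * ((1 - t) * D) <= t * (r ^+ 2 - m) by nra.
    rewrite ler_pM2l // in H2.
    nra.
  have ex : x - c = Num.sqrt m *: h + (c0 - c) by rewrite /x (addrC c0) addrA.
  have hcc : ip h (c0 - c) = 0 by rewrite (ipBr hip) hc0 (perp0 hip h hunit) subrr.
  apply: le_sq; [exact: normr_ge0 | exact: ltW | ].
  by rewrite ex (pyth hip h hunit) // smm.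
Qed.
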